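(* In the setting described in the context, let $i\in\mathcal V$ and let $z_{-i}=(z_j)_{j\ne i}\in[0,1]^{n-1}$ be such that $\mathcal S(z_{-i})=\{j\ne i: z_j=1\}\ne\emptyset$. Then: (i) the map $z_i\mapsto\upsilon_i(z_i,z_{-i})$ is constant on $[0,1)$; (ii) $\mathcal B_i(z_{-i})\in\{[0,1),\,[0,1],\,\{1\}\}$; (iii) if $\sigma_i^2\ge\sigma_j^2$ for every $j\in\mathcal S(z_{-i})$, then $\mathcal B_i(z_{-i})\in\{[0,1),[0,1]\}$; (iv) if $\sigma_i^2>\sigma_j^2$ for every $j\in\mathcal S(z_{-i})$, then $\mathcal B_i(z_{-i})=[0,1)$.
   Context: Let $n\ge2$ and $\mathcal V=\{1,\dots,n\}$. Let $P\in\mathbb{R}^{n\times n}$ be a row-stochastic, irreducible, aperiodic matrix (the graph on $\mathcal V$ with edge $(i,j)$ iff $P_{ij}>0$ is strongly connected with gcd of cycle lengths $1$). For $z\in[0,1]^n$, $W(z)=(I-[z])P+[z]$ ($[z]$ the diagonal matrix with diagonal $z$) and $H(z)=\lim_{t\to\infty}W(z)^t$ (the limit exists and is row-stochastic). Let $\sigma_1^2,\dots,\sigma_n^2>0$. Agent $i$'s cost is $\upsilon_i(z)=\sum_jH_{ij}(z)^2\sigma_j^2$, written $\upsilon_i(z_i,z_{-i})$, and her best response set is $\mathcal B_i(z_{-i})=\arg\min_{z_i\in[0,1]}\upsilon_i(z_i,z_{-i})$. *)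

(* Defs.v *)
From HB Require Import structures.
From mathcomp Require Import all_boot all_order all_algebra.
From mathcomp Require Import all_classical all_reals all_analysis.
Set Implicit Arguments. Unset Strict Implicit. Unset Printing Implicit Defensive.
Import Order.TTheory GRing.Theory Num.Theory numFieldNormedType.Exports.
Local Open Scope ring_scope.
Local Open Scope classical_set_scope.

Section Defs.
Variables (R : realType) (n : nat).

Definition mxpow (A : 'M[R]_n) (t : nat) : 'M[R]_n := iter t (fun B => B *m A) 1%:M.

Definition row_stochastic (P : 'M[R]_n) : Prop :=
  (forall i j, 0 <= P i j) /\ (forall i, \sum_(j < n) P i j = 1).

Definition edge (P : 'M[R]_n) : rel 'I_n := fun i j => 0 < P i j.

Definition irreducible_mx (P : 'M[R]_n) : Prop :=
  forall i j, connect (edge P) i j.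

Definition cycle_length (P : 'M[R]_n) (k : nat) : Prop :=
  exists (i : 'I_n) (s : seq 'I_n),
    [/\ size s = k, (0 < k)%N, path (edge P) i s & last i s = i].

Definition aperiodic_mx (P : 'M[R]_n) : Prop :=
  forall d : nat, (forall k, cycle_length P k -> (d %| k)%N) -> d = 1%N.

Definition Wmx (P : 'M[R]_n) (z : 'rV[R]_n) : 'M[R]_n :=
  (1%:M - diag_mx z) *m P + diag_mx z.

Definition Hmx (P : 'M[R]_n) (z : 'rV[R]_n) : 'M[R]_n :=
  \matrix_(i, j) limn (fun t => mxpow (Wmx P z) t i j).

Definition cost (P : 'M[R]_n) (sigma2 : 'I_n -> R) (i : 'I_n) (z : 'rV[R]_n) : R :=
  \sum_(j < n) (Hmx P z i j) ^+ 2 * sigma2 j.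

Definition upd (z : 'rV[R]_n) (i : 'I_n) (x : R) : 'rV[R]_n :=
  \row_j (if j == i then x else z 0 j).

(* best response set B_i(z_{-i}) = argmin_{x in [0,1]} v_i(x, z_{-i});
   it only depends on z through z_{-i} *)
Definition best_response (P : 'M[R]_n) (sigma2 : 'I_n -> R) (i : 'I_n)
  (z : 'rV[R]_n) : set R :=
  [set x | 0 <= x <= 1 /\
     forall y, 0 <= y <= 1 -> cost P sigma2 i (upd z i x) <= cost P sigma2 i (upd z i y)].

End Defs.

(* Main.v *)
Require Import Defs.
From HB Require Import structures.
From mathcomp Require Import all_boot all_order all_algebra.
From mathcomp Require Import all_classical all_reals all_analysis.
Import Order.TTheory GRing.Theory Num.Theory numFieldNormedType.Exports.
Local Open Scope ring_scope.
Local Open Scope classical_set_scope.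

Section Aux.
Variable R : realType.
Variable n : nat.
Implicit Types (W : 'M[R]_n).

Lemma mxpowS W t : mxpow W t.+1 = mxpow W t *m W.
Proof. by []. Qed.

Lemma mxpow0 W : mxpow W 0 = 1%:M.
Proof. by []. Qed.

Lemma mxpowSl W t : mxpow W t.+1 = W *m mxpow W t.
Proof.
elim: t => [|t IH]; first by rewrite mxpowS mxpow0 mul1mx mulmx1.
by rewrite [LHS]mxpowS [in LHS]IH -mulmxA -mxpowS.
Qed.

Lemma sum_delta (g : 'I_n -> R) k : \sum_j (k == j)%:R * g j = g k.
Proof.
rewrite (bigD1 k) //= eqxx mul1r big1 ?addr0 // => j /negPf.
by rewrite eq_sym => ->; rewrite mul0r.
Qed.

Definition stoch W := (forall k l, 0 <= W k l) /\ (forall k, \sum_l W k l = 1).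

Lemma stoch_pow W t : stoch W -> stoch (mxpow W t).
Proof.
move=> [W0 W1]; elim: t => [|t [IH0 IH1]].
  split=> [k l|k]; first by rewrite mxpow0 mxE ler0n.
  rewrite (eq_bigr (fun l => (k == l)%:R * 1)); first by rewrite sum_delta.
  by move=> l _; rewrite mxpow0 mxE mulr1.
split=> [k l|k].
  by rewrite mxpowS mxE; apply: sumr_ge0 => j _; rewrite mulr_ge0.
under eq_bigr do rewrite mxpowS mxE.
rewrite exchange_big /= -(IH1 k); apply: eq_bigr => j _.
by rewrite -mulr_sumr W1 mulr1.
Qed.

Lemma stoch_le1 W k l : stoch W -> W k l <= 1.
Proof.
move=> [W0 W1]; rewrite -(W1 k) (bigD1 l) //= lerDl.
by apply: sumr_ge0.
Qed.

Lemma maxprinc W (g : 'I_n -> R) : stoch W ->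
  (forall k, g k = \sum_l W k l * g l) ->
  (forall k, exists2 s, connect (edge W) k s & g s <= 0) ->
  forall k, g k <= 0.
Proof.
move=> [W0 W1] hg hc k.
case: (@arg_maxP _ _ _ k xpredT g isT) => m _ Hm.
have prop : forall a b, g a = g m -> edge W a b -> g b = g m.
  move=> a b ga ab.
  have : \sum_l W a l * (g m - g l) = 0.
    rewrite (eq_bigr (fun l => W a l * g m - W a l * g l)) => [|l _]; last by rewrite mulrBr.
    by rewrite sumrB -mulr_suml W1 mul1r -hg ga subrr.
  move/eqP; rewrite psumr_eq0 => [/allP H|l _]; last by rewrite mulr_ge0 // subr_ge0; apply: Hm.
  have := H b (mem_index_enum b); rewrite /= mulf_eq0 (gt_eqF ab) /= subr_eq0.
  by move=> /eqP.
have pth : forall p a, g a = g m -> path (edge W) a p -> g (last a p) = g m.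
  elim => [|b p IH] a ga //=; case/andP => ab pb.
  exact: IH (prop _ _ ga ab) pb.
have [s /connectP [p pp ->] gs] := hc m.
by rewrite (le_trans (Hm k isT)) // -(pth p m erefl pp).
Qed.


Lemma cvg_sumR (I : finType) (Q : pred I) (f : I -> nat -> R) (a : I -> R) :
  (forall k, Q k -> f k t @[t --> \oo] --> a k) ->
  (\sum_(k | Q k) f k t) @[t --> \oo] --> \sum_(k | Q k) a k.
Proof. by move=> h; apply: (@cvg_big _ _ +%R 0 Q add_continuous) => //. Qed.

Section Absorb.
Variable W : 'M[R]_n.
Variable A : pred 'I_n.
Hypothesis hW : stoch W.
Hypothesis hA : forall s l, A s -> W s l = (s == l)%:R.
Hypothesis hc : forall k, exists2 s, connect (edge W) k s & A s.

Lemma absorb_pow t s l : A s -> mxpow W t s l = (s == l)%:R.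
Proof.
move=> As; elim: t l => [|t IH] l; first by rewrite mxpow0 mxE.
rewrite mxpowS mxE (eq_bigr (fun j => (s == j)%:R * W j l)).
  by rewrite sum_delta hA.
by move=> j _; rewrite IH.
Qed.

Let p (t : nat) (k l : 'I_n) : R := mxpow W t k l.

Lemma p_ge0 t k l : 0 <= p t k l.
Proof. by case: (stoch_pow W t hW) => h _; apply: h. Qed.

Lemma cvg_abs k l : A l -> cvgn (p ^~ k ^~ l).
Proof.
move=> Al; apply: nondecreasing_is_cvgn.
  apply/nondecreasing_seqP => t; rewrite /p mxpowS mxE (bigD1 l) //= hA // eqxx mulr1.
  by rewrite lerDl; apply: sumr_ge0 => j _; rewrite mulr_ge0 ?p_ge0 //; case: hW.
by exists 1 => _ [t _ <-]; apply: stoch_le1; apply: stoch_pow.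
Qed.

Let m t k := \sum_(l | ~~ A l) p t k l.

Lemma mE t k : m t k = 1 - \sum_(l | A l) p t k l.
Proof.
case: (stoch_pow W t hW) => _ h1; rewrite -(h1 k) (bigID A) /=.
by rewrite addrAC subrr add0r.
Qed.

Let ml k := limn (m ^~ k).

Lemma m_cvg k : m t k @[t --> \oo] --> ml k.
Proof.
apply: (cvgP (1 - \sum_(l | A l) limn (p ^~ k ^~ l))).
rewrite (_ : m ^~ k = fun t => 1 - \sum_(l | A l) p t k l); last first.
  by apply: funext => t; rewrite mE.
apply: cvgB; first exact: cvg_cst.
by apply: cvg_sumR => l Al; apply: cvg_abs.
Qed.

Lemma m_harm t k : m t.+1 k = \sum_j W k j * m t j.
Proof.
rewrite /m /p; under eq_bigr do rewrite mxpowSl mxE.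
rewrite exchange_big /=; apply: eq_bigr => j _.
by rewrite mulr_sumr.
Qed.

Lemma ml_harm k : ml k = \sum_j W k j * ml j.
Proof.
have h1 := m_cvg k; rewrite -cvg_shiftS /= in h1.
have h2 : (fun t => m t.+1 k) @ \oo --> \sum_j W k j * ml j.
  under eq_fun do rewrite m_harm.
  by apply: cvg_sumR => j _; apply: cvgMr; apply: m_cvg.
exact: (cvg_unique _ h1 h2).
Qed.

Lemma ml_A s : A s -> ml s = 0.
Proof.
move=> As; rewrite /ml (_ : m ^~ s = fun=> 0) ?lim_cst //.
apply: funext => t; rewrite /m big1 // => l Al.
rewrite /p absorb_pow //; case: eqP => // esl.
by move: Al; rewrite -esl As.
Qed.

Lemma ml_ge0 k : 0 <= ml k.
Proof.
apply: limr_ge; first exact: m_cvg.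
by apply: nearW => t; apply: sumr_ge0 => l _; apply: p_ge0.
Qed.

Lemma ml0 k : ml k = 0.
Proof.
apply/eqP; rewrite eq_le ml_ge0 andbT.
apply: (maxprinc _ _ hW ml_harm) => k'.
by have [s cs As] := hc k'; exists s => //; rewrite ml_A.
Qed.

Lemma cvg_trans0 k l : ~~ A l -> p t k l @[t --> \oo] --> 0.
Proof.
move=> Al; apply: (@squeeze_cvgr _ _ _ _ (fun=> 0) (m ^~ k)).
  apply: nearW => t; rewrite p_ge0 /= /m (bigD1 l) //= lerDl.
  by apply: sumr_ge0 => j _; apply: p_ge0.
  exact: cvg_cst.
by rewrite -(ml0 k); apply: m_cvg.
Qed.

Lemma cvg_all k l : cvgn (p ^~ k ^~ l).
Proof.
case Al: (A l); first exact: cvg_abs.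
by apply: cvgP; apply: cvg_trans0; rewrite Al.
Qed.

Lemma lim_trans k l : ~~ A l -> limn (p ^~ k ^~ l) = 0.
Proof. by move=> Al; apply: cvg_lim => //; apply: cvg_trans0. Qed.

End Absorb.
End Aux.
Arguments stoch {R n}.
Arguments sum_delta {R n}.
Arguments stoch_pow {R n}.
Arguments stoch_le1 {R n}.
Arguments maxprinc {R n}.
Arguments mxpowS {R n}.
Arguments mxpowSl {R n}.
Arguments mxpow0 {R n}.

Section WSec.
Variable R : realType.
Variable n : nat.
Variable P : 'M[R]_n.
Variable u : 'rV[R]_n.
Hypothesis hP : row_stochastic P.
Hypothesis hu : forall k, 0 <= u 0 k <= 1.

Lemma WmxE k l : Wmx P u k l = (1 - u 0 k) * P k l + u 0 k * (k == l)%:R.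
Proof.
rewrite /Wmx mulmxBl mul1mx mul_diag_mx !mxE mulr_natr.
by rewrite mulrBl mul1r.
Qed.

Lemma Wstoch : stoch (Wmx P u).
Proof.
case: hP => P0 P1; split=> [k l|k].
  have /andP[u0 u1] := hu k.
  by rewrite WmxE addr_ge0 ?mulr_ge0 ?subr_ge0.
under eq_bigr do rewrite WmxE.
rewrite big_split /= -mulr_sumr P1 mulr1.
rewrite (eq_bigr (fun l => (k == l)%:R * u 0 k)); last by move=> l _; rewrite mulrC.
by rewrite sum_delta subrK.
Qed.

Lemma WA s l : u 0 s == 1 -> Wmx P u s l = (s == l)%:R.
Proof. by move/eqP=> us; rewrite WmxE us subrr mul0r add0r mul1r. Qed.

Lemma Wconn : irreducible_mx P -> (exists j, u 0 j = 1) ->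
  forall k, exists2 s, connect (edge (Wmx P u)) k s & (u 0 s == 1).
Proof.
move=> irr [j uj] k.
move: uj; have /connectP [p pp ->] := irr k j.
elim: p k pp => [|b p IH] k /=; first by move=> _ uk; exists k => //; apply/eqP.
case/andP => kb pb ul.
case uk: (u 0 k == 1); first by exists k.
have [s cs us] := IH b pb ul.
exists s => //; apply: (connect_trans _ cs); apply: connect1.
rewrite /edge WmxE; apply: ltr_pwDl.
  rewrite mulr_gt0 // subr_gt0 lt_neqAle uk /=.
  by have /andP[_ ->] := hu k.
by have /andP[u0 _] := hu k; apply: mulr_ge0.
Qed.

Hypothesis irr : irreducible_mx P.
Hypothesis hj : exists j, u 0 j = 1.

Let W := Wmx P u.
Let Ab := fun k => u 0 k == 1.

Lemma H_cvg k l : mxpow W t k l @[t --> \oo] --> Hmx P u k l.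
Proof.
rewrite /Hmx mxE.
exact: (cvg_all _ _ _ Ab Wstoch WA (Wconn irr hj)).
Qed.

Lemma H_trans k l : u 0 l != 1 -> Hmx P u k l = 0.
Proof.
move=> ul; rewrite /Hmx mxE.
exact: (lim_trans _ _ _ Ab Wstoch WA (Wconn irr hj)).
Qed.

Lemma H_abs s l : u 0 s == 1 -> Hmx P u s l = (s == l)%:R.
Proof.
move=> us; rewrite /Hmx mxE.
rewrite (_ : (fun t => _) = fun=> (s == l)%:R) ?lim_cst //.
by apply: funext => t; rewrite (absorb_pow _ _ _ Ab) //; apply: WA.
Qed.

Lemma H_harmW k l : Hmx P u k l = \sum_j W k j * Hmx P u j l.
Proof.
have h1 := H_cvg k l; rewrite -cvg_shiftS /= in h1.
have h2 : (fun t => mxpow W t.+1 k l) @ \oo --> \sum_j W k j * Hmx P u j l.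
  under eq_fun do rewrite mxpowSl mxE.
  by apply: cvg_sumR => j _; apply: cvgMr; apply: H_cvg.
exact: (cvg_unique _ h1 h2).
Qed.

Lemma sumW (g : 'I_n -> R) k :
  \sum_j W k j * g j = (1 - u 0 k) * \sum_j P k j * g j + u 0 k * g k.
Proof.
rewrite /W; under eq_bigr do rewrite WmxE mulrDl -!mulrA.
by rewrite big_split /= -!mulr_sumr sum_delta.
Qed.

Lemma harmW (g : 'I_n -> R) :
  (forall k, u 0 k != 1 -> g k = \sum_j P k j * g j) ->
  forall k, g k = \sum_j W k j * g j.
Proof.
move=> hg k; rewrite sumW.
case: (eqVneq (u 0 k) 1) => [->|uk]; first by rewrite subrr mul0r add0r mul1r.
by rewrite -hg // mulrBl mul1r subrK.
Qed.

Lemma H_harmP k l : u 0 k != 1 -> Hmx P u k l = \sum_j P k j * Hmx P u j l.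
Proof.
move=> uk; have E := H_harmW k l.
rewrite sumW in E.
set S := \sum_j _ in E *.
have E' : (1 - u 0 k) * Hmx P u k l = (1 - u 0 k) * S.
  by rewrite mulrBl mul1r {1}E addrK.
apply: (mulfI _ E'); by rewrite subr_eq0 eq_sym.
Qed.

Lemma H_ge0 k l : 0 <= Hmx P u k l.
Proof.
have h := H_cvg k l; rewrite -(cvg_lim _ h) //.
apply: limr_ge; first exact: (cvgP _ h).
apply: nearW => t; by case: (stoch_pow W t Wstoch) => h0 _; apply: h0.
Qed.

Lemma H_sum1 k : \sum_l Hmx P u k l = 1.
Proof.
have h : (fun t => \sum_l mxpow W t k l) @ \oo --> \sum_l Hmx P u k l.
  by apply: cvg_sumR => l _; apply: H_cvg.
rewrite (_ : (fun t => _) = fun=> 1) in h; last first.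
  by apply: funext => t; case: (stoch_pow W t Wstoch) => _ ->.
exact: (cvg_unique _ h (cvg_cst _)).
Qed.

End WSec.
Arguments H_trans {R n P u}.
Arguments H_harmP {R n P u}.
Arguments Wconn {R n P u}.
Arguments Wstoch {R n P u}.
Arguments harmW {R n P u g}.
Arguments H_abs {R n P u}.
Arguments H_ge0 {R n P u}.
Arguments H_sum1 {R n P u}.

Lemma H_unique (R : realType) (n : nat) (P : 'M[R]_n) (u v : 'rV[R]_n) :
  row_stochastic P -> irreducible_mx P ->
  (forall k, 0 <= u 0 k <= 1) -> (forall k, 0 <= v 0 k <= 1) ->
  (forall k, (u 0 k == 1) = (v 0 k == 1)) -> (exists j, u 0 j = 1) ->
  forall k l, Hmx P u k l = Hmx P v k l.
Proof.
move=> hP irr hu hv huv hj.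
have hjv : exists j, v 0 j = 1.
  by case: hj => j uj; exists j; apply/eqP; rewrite -huv uj.
move=> k l.
case ul: (u 0 l == 1); last first.
  by rewrite (H_trans hP hu irr hj) ?ul // (H_trans hP hv irr hjv) // -huv ul.
pose d k := Hmx P u k l - Hmx P v k l.
have dA : forall s, u 0 s == 1 -> d s = 0.
  by move=> s us; rewrite /d !H_abs ?subrr // -huv.
have dP : forall k, u 0 k != 1 -> d k = \sum_j P k j * d j.
  move=> k' uk; rewrite /d (H_harmP hP hu irr hj) // (H_harmP hP hv irr hjv) -?huv //.
  by rewrite -sumrB; apply: eq_bigr => j _; rewrite mulrBr.
have dW := harmW dP.
have dW' : forall k, - d k = \sum_j Wmx P u k j * - d j.
  by move=> k'; rewrite (dW k') -sumrN; apply: eq_bigr => j _; rewrite mulrN.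
have c1 := Wconn hu irr hj.
have h1 : d k <= 0.
  apply: (maxprinc _ _ (Wstoch hP hu) dW) => k'.
  by have [s cs us] := c1 k'; exists s => //; rewrite dA.
have h2 : - d k <= 0.
  apply: (maxprinc _ (fun k => - d k) (Wstoch hP hu) dW') => k'.
  by have [s cs us] := c1 k'; exists s => //; rewrite dA // oppr0.
apply/eqP; rewrite -subr_eq0; apply/eqP; apply/le_anti.
by rewrite h1 /= -oppr_le0.
Qed.

Lemma Bshape (R : realType) (f : R -> R) (c s : R) :
  (forall x, 0 <= x < 1 -> f x = c) -> f 1 = s ->
  let B := [set x | 0 <= x <= 1 /\ forall y, 0 <= y <= 1 -> f x <= f y] in
  [/\ (c < s -> B = `[0, 1[), (c = s -> B = `[0, 1]) & (s < c -> B = [set 1])].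
Proof.
move=> hf h1 B.
have fy : forall y, 0 <= y <= 1 -> f y = c \/ (y = 1 /\ f y = s).
  move=> y /andP[y0]; rewrite le_eqVlt => /orP[/eqP->|y1]; first by right.
  by left; apply: hf; rewrite y0.
have f0 : f 0 = c by apply: hf; rewrite lexx ltr01.
split=> hcs; apply/seteqP; split => x /=.
- rewrite in_itv /=; case=> /andP[x0 x1] H; rewrite x0 /=.
  rewrite lt_neqAle x1 andbT; apply/eqP => ex.
  have := H 0; rewrite lexx ler01 ex h1 f0 => /(_ isT).
  by rewrite leNgt hcs.
- rewrite in_itv /= => /andP[x0 x1]; split; first by rewrite x0 (ltW x1).
  move=> y hy.
  rewrite hf ?x0 //; case: (fy y hy) => [->|[_ ->]] //; exact: ltW.
- rewrite in_itv /=; by case.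
- rewrite in_itv /= => /andP[x0 x1]; split; first by rewrite x0 x1.
  move=> y hy.
  case: (fy x) => [|->|[_ ->]]; first by rewrite x0.
    by case: (fy y hy) => [->|[_ ->]] //; rewrite hcs.
  by case: (fy y hy) => [->|[_ ->]] //; rewrite hcs.
- case=> /andP[x0 x1] H; apply/eqP; rewrite eq_le x1 /= leNgt; apply/negP => xl1.
  have := H 1; rewrite ler01 lexx h1 hf ?x0 // => /(_ isT).
  by rewrite leNgt hcs.
- move=> ->; split; first by rewrite ler01 lexx.
  move=> y hy; rewrite h1.
  by case: (fy y hy) => [->|[_ ->]] //; exact: ltW.
Qed.

Lemma sum_bound (R : realType) (n : nat) (h sg : 'I_n -> R) (s : R) (Sp : pred 'I_n) :
  (forall l, 0 <= h l) -> \sum_l h l = 1 -> (forall l, 0 < sg l) ->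
  (forall l, ~~ Sp l -> h l = 0) ->
  ((forall l, Sp l -> sg l <= s) -> \sum_l h l ^+ 2 * sg l <= s) /\
  ((forall l, Sp l -> sg l < s) -> \sum_l h l ^+ 2 * sg l < s).
Proof.
move=> h0 h1 sg0 hS.
have hle1 : forall l, h l <= 1.
  by move=> l; rewrite -h1 (bigD1 l) //= lerDl; apply: sumr_ge0.
have sq : forall l, h l ^+ 2 * sg l <= h l * sg l.
  by move=> l; rewrite ler_pM2r // expr2 ler_piMr.
split=> hs.
  apply: (@le_trans _ _ (\sum_l h l * s)).
    apply: ler_sum => l _; case: (boolP (Sp l)) => Sl; last by rewrite hS // expr0n /= !mul0r.
    by apply: (le_trans (sq l)); rewrite ler_wpM2l // hs.
  by rewrite -mulr_suml h1 mul1r.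
have [l0 hl0] : exists l0, 0 < h l0.
  case: (boolP [exists l, 0 < h l]) => [/existsP//|/existsPn H].
  exfalso; move: h1; rewrite big1 => [/eqP|l _]; first by rewrite eq_sym oner_eq0.
  by apply/eqP; rewrite eq_le h0 andbT leNgt H.
have Sl0 : Sp l0.
  by case: (boolP (Sp l0)) => // /hS e; move: hl0; rewrite e ltxx.
apply: (@lt_le_trans _ _ (\sum_l h l * s)); last by rewrite -mulr_suml h1 mul1r.
rewrite (bigD1 l0) //= [X in _ < X](bigD1 l0) //=; apply: ltr_leD.
  by apply: (le_lt_trans (sq l0)); rewrite ltr_pM2l // hs.
apply: ler_sum => l _; case: (boolP (Sp l)) => Sl; last by rewrite hS // expr0n /= !mul0r.
by apply: (le_trans (sq l)); rewrite ler_wpM2l // ltW // hs.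
Qed.

Theorem proposition4 (R : realType) (n : nat) (P : 'M[R]_n) (sigma2 : 'I_n -> R)
  (i : 'I_n) (z : 'rV[R]_n) :
  (2 <= n)%N ->
  row_stochastic P -> irreducible_mx P -> aperiodic_mx P ->
  (forall j, 0 < sigma2 j) ->
  (forall j, j != i -> 0 <= z 0 j <= 1) ->
  (exists j, j != i /\ z 0 j = 1) ->
  let S := [set j | j != i /\ z 0 j = 1] in
  let B := best_response P sigma2 i z in
  [/\ (forall x y, 0 <= x < 1 -> 0 <= y < 1 ->
         cost P sigma2 i (upd z i x) = cost P sigma2 i (upd z i y)),
      (B = (`[0, 1[) \/ B = (`[0, 1]) \/ B = [set (1 : R)]),
      ((forall j, S j -> sigma2 j <= sigma2 i) -> B = (`[0, 1[) \/ B = (`[0, 1])) &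
      ((forall j, S j -> sigma2 j < sigma2 i) -> B = (`[0, 1[))].
Proof.
move=> _ hP irr _ hs hz [j [ji zj]] S B.
have updE : forall x k, upd z i x 0 k = if k == i then x else z 0 k.
  by move=> x k; rewrite mxE.
have hu : forall x, 0 <= x <= 1 -> forall k, 0 <= upd z i x 0 k <= 1.
  by move=> x hx k; rewrite updE; case: eqP => // /eqP; apply: hz.
have hj : forall x, exists j, upd z i x 0 j = 1.
  by move=> x; exists j; rewrite updE (negPf ji).
have eqA : forall x y, x < 1 -> y < 1 -> forall k,
    (upd z i x 0 k == 1) = (upd z i y 0 k == 1).
  by move=> x y x1 y1 k; rewrite !updE; case: (k == i) => //; rewrite (lt_eqF x1) (lt_eqF y1).
have h01 : 0 <= (0 : R) <= 1 by rewrite lexx ler01.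
have Heq : forall x, 0 <= x < 1 -> forall k l,
    Hmx P (upd z i x) k l = Hmx P (upd z i 0) k l.
  move=> x /andP[x0 x1]; apply: H_unique => //.
  - by apply: hu; rewrite x0 ltW.
  - exact: hu.
  - by apply: eqA => //; rewrite ltr01.
set c := cost P sigma2 i (upd z i 0).
have costc : forall x, 0 <= x < 1 -> cost P sigma2 i (upd z i x) = c.
  by move=> x hx; rewrite /cost /c; apply: eq_bigr => l _; rewrite Heq.
have cost1 : cost P sigma2 i (upd z i 1) = sigma2 i.
  rewrite /cost (eq_bigr (fun l => (i == l)%:R * sigma2 l)) ?sum_delta // => l _.
  rewrite H_abs ?updE ?eqxx //.
  by case: eqP => _; rewrite /= ?(expr1n, expr0n).
have [Ba Bb Bc] := @Bshape R (fun x => cost P sigma2 i (upd z i x)) c (sigma2 i) costc cost1.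
rewrite /= in Ba Bb Bc.
have eB : B = [set x | 0 <= x <= 1 /\ forall y, 0 <= y <= 1 ->
    cost P sigma2 i (upd z i x) <= cost P sigma2 i (upd z i y)] by [].
rewrite eB.
have hu0 := hu 0 h01.
have [bw bs] := @sum_bound R n (fun l => Hmx P (upd z i 0) i l) sigma2 (sigma2 i)
   (fun l => upd z i 0 0 l == 1) (H_ge0 hP hu0 irr (hj 0) i) (H_sum1 hP hu0 irr (hj 0) i) hs
   (fun l ul => H_trans hP hu0 irr (hj 0) i l ul).
have SE : forall l, upd z i 0 0 l == 1 -> S l.
  move=> l; rewrite updE; case: (eqVneq l i) => [->|li].
    by rewrite eq_sym oner_eq0.
  by move=> /eqP zl; split.
split.
- by move=> x y hx hy; rewrite !costc.
- case: (ltgtP c (sigma2 i)) => hcs.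
  + by left; apply: Ba.
  + by right; right; apply: Bc.
  + by right; left; apply: Bb.
- move=> hS; have : c <= sigma2 i by apply: bw => l /SE; apply: hS.
  rewrite le_eqVlt => /orP[/eqP e|e]; first by right; apply: Bb.
  by left; apply: Ba.
- move=> hS; apply: Ba; apply: bs => l /SE; apply: hS.
Qed.
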